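(* Let $\alpha:\mathbb{C}\to\mathbb{C}$ be an exponential automorphism, i.e. a function satisfying $\alpha(z_1+z_2)=\alpha(z_1)+\alpha(z_2)$ and $\alpha(e^z)=e^{\alpha(z)}$ for all $z,z_1,z_2\in\mathbb{C}$. Then for every positive rational number $t$ there is an integer $n=n(\alpha,t)$ such that $\alpha(\ln t)=\ln t+2\pi n i$.
   Context: Here $\ln t$ denotes the usual real-valued natural logarithm of the positive real number $t$. *)

(* Defs.v *)
From Stdlib Require Import Reals QArith.
From Coquelicot Require Import Coquelicot.
Open Scope R_scope.

Definition Cexp (z : C) : C :=
  (exp (Re z) * cos (Im z), exp (Re z) * sin (Im z)).

Definition exp_automorphism (alpha : C -> C) : Prop :=
  (forall z1 z2 : C, alpha (Cplus z1 z2) = Cplus (alpha z1) (alpha z2)) /\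
  (forall z : C, alpha (Cexp z) = Cexp (alpha z)).

(* Main.v *)
Require Import Defs.
From Stdlib Require Import Reals QArith Lra Psatz.
From Coquelicot Require Import Coquelicot.
Open Scope R_scope.

Section S.
Variable alpha : C -> C.
Hypothesis Ha : exp_automorphism alpha.

Lemma add_pair a b c d : alpha (a + c, b + d) = Cplus (alpha (a, b)) (alpha (c, d)).
Proof. destruct Ha as [H _]. rewrite <- H. reflexivity. Qed.

Lemma a0 : alpha (0, 0) = (0, 0).
Proof.
  pose proof (add_pair 0 0 0 0) as H. rewrite !Rplus_0_r in H.
  destruct (alpha (0,0)) as [x y]. unfold Cplus in H; simpl in H.
  injection H as H1 H2. f_equal; lra.
Qed.

Lemma a1 : alpha (1, 0) = (1, 0).
Proof.
  destruct Ha as [_ H]. specialize (H (0,0)). rewrite a0 in H.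
  unfold Cexp in H; simpl in H. rewrite exp_0, cos_0, sin_0, !Rmult_1_l in H. exact H.
Qed.

Lemma anat n : alpha (INR n, 0) = (INR n, 0).
Proof.
  induction n. simpl. apply a0.
  rewrite S_INR. replace 0 with (0 + 0) at 1 by ring.
  rewrite add_pair, IHn, a1. unfold Cplus; simpl. f_equal; ring.
Qed.

Lemma aneg x y : alpha (- x, - y) = (- fst (alpha (x,y)), - snd (alpha (x,y))).
Proof.
  pose proof (add_pair x y (-x) (-y)) as H.
  replace (x + - x) with 0 in H by ring. replace (y + - y) with 0 in H by ring.
  rewrite a0 in H. destruct (alpha (x,y)) as [u v]. destruct (alpha (-x,-y)) as [u' v'].
  unfold Cplus in H; simpl in *. injection H as H1 H2. f_equal; lra.
Qed.

Lemma aint z : alpha (IZR z, 0) = (IZR z, 0).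
Proof.
  destruct z as [|p|p].
  - apply a0.
  - rewrite <- Znat.positive_nat_Z, <- INR_IZR_INZ. apply anat.
  - rewrite <- Pos2Z.opp_pos, opp_IZR, <- Znat.positive_nat_Z, <- INR_IZR_INZ.
    replace 0 with (-0) at 1 by ring. rewrite aneg, anat. simpl. f_equal; ring.
Qed.

Lemma amul n x y : alpha (INR n * x, INR n * y) =
  (INR n * fst (alpha (x,y)), INR n * snd (alpha (x,y))).
Proof.
  induction n. simpl. rewrite !Rmult_0_l. apply a0.
  rewrite S_INR. replace ((INR n + 1) * x) with (INR n * x + x) by ring.
  replace ((INR n + 1) * y) with (INR n * y + y) by ring.
  rewrite add_pair, IHn. destruct (alpha (x,y)). unfold Cplus; simpl. f_equal; ring.
Qed.

Lemma aQ t : alpha (Q2R t, 0) = (Q2R t, 0).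
Proof.
  destruct t as [num den]. unfold Q2R; simpl.
  set (d := Pos.to_nat den).
  assert (Hd : IZR (Z.pos den) = INR d) by (unfold d; rewrite INR_IZR_INZ, Znat.positive_nat_Z; reflexivity).
  assert (Hdp : INR d <> 0) by (rewrite <- Hd; apply not_0_IZR; discriminate).
  rewrite Hd.
  pose proof (amul d (IZR num * / INR d) 0) as H.
  replace (INR d * (IZR num * / INR d)) with (IZR num) in H by (field; auto).
  rewrite Rmult_0_r, aint in H.
  destruct (alpha (IZR num * / INR d, 0)) as [u v]. simpl in H.
  injection H as H1 H2. f_equal.
  - apply (Rmult_eq_reg_l (INR d)); auto. rewrite <- H1. field; auto.
  - apply (Rmult_eq_reg_l (INR d)); auto. rewrite <- H2. ring.
Qed.
End S.

Theorem mainTheorem2 (alpha : C -> C) (Halpha : exp_automorphism alpha)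
  (t : Q) (ht : (0 < t)%Q) :
  exists n : Z,
    alpha (RtoC (ln (Q2R t))) = Cplus (RtoC (ln (Q2R t))) ((0, 2 * PI * IZR n) : C).
Proof.
  assert (tp : 0 < Q2R t) by (apply Qreals.Qlt_Rlt in ht; unfold Q2R in ht at 1; simpl in ht; lra).
  pose proof (aQ alpha Halpha t) as HQ.
  destruct Halpha as [_ He].
  specialize (He (RtoC (ln (Q2R t)))).
  unfold Cexp, RtoC in He; simpl in He.
  rewrite exp_ln, cos_0, sin_0, Rmult_1_r, Rmult_0_r in He by exact tp.
  rewrite HQ in He. unfold RtoC.
  destruct (alpha (ln (Q2R t), 0)) as [a b]. unfold Cexp in He; simpl in He.
  injection He as E1 E2.
  assert (ea : 0 < exp a) by apply exp_pos.
  assert (sb : sin b = 0).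
  { destruct (Rmult_integral _ _ (eq_sym E2)) as [h|h]; [lra|exact h]. }
  pose proof (sin2_cos2 b) as SC. rewrite sb in SC. unfold Rsqr in SC.
  assert (cb : cos b = 1).
  { assert (cos b = 1 \/ cos b = -1) as [h|h] by (assert ((cos b - 1) * (cos b + 1) = 0) by nra;
      destruct (Rmult_integral _ _ H) as [h|h]; [left|right]; lra).
    exact h. exfalso. rewrite h in E1. nra. }
  rewrite cb, Rmult_1_r in E1.
  assert (sin (b/2) = 0).
  { pose proof (cos_2a_sin (b/2)) as C2. replace (2 * (b/2)) with b in C2 by field.
    rewrite cb in C2. nra. }
  destruct (sin_eq_0_0 _ H) as [k Hk]. exists k.
  unfold Cplus; simpl. f_equal.
  - rewrite E1, ln_exp. ring.
  - replace b with (2 * (b/2)) by field. rewrite Hk. ring.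
Qed.
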